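(* For any integers $i\ge1$ and $w\ge0$ and every $j\in\{0,\dots,w\}$, it holds that $\mathcal{P}_i[j]=\max_{a+b=j,\ a,b\ge0}\big(\mathcal{P}_{i-1}[a]+\mathcal{P}_{i-1}[b]\big)$; that is, $\mathcal{P}_i[0..w]$ coincides with the first $w+1$ entries of the $(\max,+)$-convolution of $\mathcal{P}_{i-1}[0..w]$ with itself.
   Context: Fix an \textsc{Unbounded Knapsack} instance: items $(p_1,w_1),\dots,(p_n,w_n)$ with $p_k,w_k\in\mathbb{N}$ and capacity $W$. For $x\in\mathbb{N}^n$: $p(x)=\sum_kp_kx_k$, $w(x)=\sum_kw_kx_k$, $\|x\|_1=\sum_kx_k$. For an integer $i\ge0$ and $j\ge0$, $\mathcal{P}_i[j]:=\max\{p(x): x\in\mathbb{N}^n,\ w(x)\le j,\ \|x\|_1\le2^i\}$. The $(\max,+)$-convolution of $A[0..n],B[0..n]$ is $C[k]=\max_{i+j=k}A[i]+B[j]$. *)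

(* Defs.v *)
From mathcomp Require Import all_boot all_order.
Set Implicit Arguments. Unset Strict Implicit. Unset Printing Implicit Defensive.

Definition profit n (p : 'I_n -> nat) (x : 'I_n -> nat) := \sum_(k < n) p k * x k.
Definition weight n (w : 'I_n -> nat) (x : 'I_n -> nat) := \sum_(k < n) w k * x k.
Definition norm1 n (x : 'I_n -> nat) := \sum_(k < n) x k.

(* P_i[j] = max { p(x) : x in N^n, w(x) <= j, ||x||_1 <= 2^i }.
   Any such x has all entries <= 2^i, so the max ranges over the finite type
   {ffun 'I_n -> 'I_(2^i).+1}; the feasible set is nonempty (x = 0), so the
   max (with bottom 0) is the genuine maximum. *)
Definition Ptab n (p w : 'I_n -> nat) (i j : nat) : nat :=
  \max_(x : {ffun 'I_n -> 'I_(2 ^ i).+1} |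
          (weight w (fun k => x k) <= j) && (norm1 (fun k => x k) <= 2 ^ i))
     profit p (fun k => x k).

(* Main.v *)
Require Import Defs.
From mathcomp Require Import all_boot all_order.
From mathcomp Require Import zify.

Section S.
Variables (n : nat) (p w : 'I_n -> nat).

Lemma feasible_le i j (x : 'I_n -> nat) :
  weight w x <= j -> norm1 x <= 2 ^ i -> profit p x <= Ptab p w i j.
Proof.
move=> Hw Hn.
have hx k : x k < (2 ^ i).+1.
  rewrite ltnS; apply: leq_trans Hn; rewrite /norm1 (bigD1 k) //=; exact: leq_addr.
pose f := [ffun k => (inord (x k) : 'I_(2 ^ i).+1)].
have fE k : nat_of_ord (f k) = x k by rewrite ffunE inordK.
have eW : weight w (fun k => f k) = weight w x.
  by rewrite /weight; apply: eq_bigr => k _; rewrite fE.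
have eN : norm1 (fun k => f k) = norm1 x.
  by rewrite /norm1; apply: eq_bigr => k _; rewrite fE.
have eP : profit p (fun k => f k) = profit p x.
  by rewrite /profit; apply: eq_bigr => k _; rewrite fE.
rewrite -eP /Ptab; apply: (leq_bigmax_cond f).
by rewrite eW eN Hw Hn.
Qed.

Lemma split_vec (x : 'I_n -> nat) m :
  exists y : 'I_n -> nat, (forall k, y k <= x k) /\ norm1 y = minn (norm1 x) m.
Proof.
pose S k := \sum_(l < n | l < k) x l.
pose y (l : 'I_n) := minn (S l.+1) m - minn (S l) m.
have Ssucc (l : 'I_n) : S l.+1 = S l + x l.
  rewrite /S (bigD1 l) //= ?ltnSn // addnC; congr (_ + _).
  by apply: eq_bigl => k; rewrite ltnS ltn_neqAle andbC.
have Smono : {homo (fun k => minn (S k) m) : a b / a <= b}.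
  move=> a b ab /=; rewrite leq_min geq_minr andbT.
  apply: leq_trans (geq_minl _ _) _.
  rewrite /S [X in _ <= X](bigID (fun l : 'I_n => l < a)) /=.
  have -> : \sum_(l < n | (l < b) && (l < a)) x l = \sum_(l < n | l < a) x l.
    by apply: eq_bigl => l /=; case: (ltnP l a) => la; rewrite ?andbF ?andbT // (leq_trans la ab).
  exact: leq_addr.
exists y; split.
  by move=> k; rewrite /y Ssucc; lia.
rewrite /norm1.
have -> : \sum_(k < n) y k = \sum_(0 <= l < n) (minn (S l.+1) m - minn (S l) m).
  by rewrite big_mkord.
rewrite (telescope_sumn 0 n Smono).
have -> : S 0 = 0 by rewrite /S big_pred0.
have -> : S n = \sum_(k < n) x k by apply: eq_bigl => k; rewrite ltn_ord.
by rewrite min0n subn0.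
Qed.

Lemma Ptab_attained i j : exists x : 'I_n -> nat,
  [/\ weight w x <= j, norm1 x <= 2 ^ i & Ptab p w i j = profit p x].
Proof.
pose P := fun x : {ffun 'I_n -> 'I_(2 ^ i).+1} =>
  (weight w (fun k => x k) <= j) && (norm1 (fun k => x k) <= 2 ^ i).
have ne : 0 < #|P|.
  apply/card_gt0P; exists [ffun => ord0].
  rewrite unfold_in /P /weight /norm1.
  by rewrite !big1 // => k _; rewrite ffunE ?muln0.
have [x0 Hx0 E] := eq_bigmax_cond (fun x : {ffun 'I_n -> 'I_(2 ^ i).+1} => profit p (fun k => x k)) ne.
exists (fun k => nat_of_ord (x0 k)); move: Hx0; rewrite unfold_in /P => /andP[H1 H2]; by split => //; rewrite -E.
Qed.

End S.

Theorem lemma5p1 (n : nat) (p w : 'I_n -> nat) (i W : nat) :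
  1 <= i ->
  forall j, j <= W ->
    Ptab p w i j = \max_(a < j.+1) (Ptab p w i.-1 a + Ptab p w i.-1 (j - a)).
Proof.
case: i => // i _ j _ /=.
apply/eqP; rewrite eqn_leq; apply/andP; split.
- apply/bigmax_leqP => x /andP[Hw Hn].
  pose X k := nat_of_ord (x k).
  have [y [yx yN]] := @split_vec n X (2 ^ i).
  pose z k := X k - y k.
  have dec (c : 'I_n -> nat) : \sum_(k < n) c k * X k =
      \sum_(k < n) c k * y k + \sum_(k < n) c k * z k.
    rewrite -big_split; apply: eq_bigr => k _ /=.
    by rewrite -mulnDr /z subnKC.
  have decN : norm1 X = norm1 y + norm1 z.
    rewrite /norm1 -big_split; apply: eq_bigr => k _ /=.
    by rewrite /z subnKC.
  have HwX : weight w X <= j by [].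
  have HnX : norm1 X <= 2 ^ i.+1 by [].
  rewrite expnS in HnX.
  have Hwy : weight w y < j.+1.
    by rewrite ltnS; apply: leq_trans HwX; rewrite /weight dec leq_addr.
  have -> : profit p (fun k => x k) = profit p y + profit p z by apply: dec.
  apply: leq_trans (leq_bigmax (Ordinal Hwy)) => /=.
  apply: leq_add; apply: feasible_le.
  + by [].
  + by rewrite yN geq_minr.
  + move: HwX; rewrite /weight dec; lia.
  + move: HnX; rewrite decN yN; lia.
- apply/bigmax_leqP => a _.
  have [x [xw xn ->]] := @Ptab_attained n p w i a.
  have [y [yw yn ->]] := @Ptab_attained n p w i (j - a).
  have -> : profit p x + profit p y = profit p (fun k => x k + y k).
    by rewrite /profit -big_split; apply: eq_bigr => k _; rewrite mulnDr.
  apply: feasible_le.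
  + have -> : weight w (fun k => x k + y k) = weight w x + weight w y.
      by rewrite /weight -big_split; apply: eq_bigr => k _; rewrite mulnDr.
    have := ltn_ord a; lia.
  + have -> : norm1 (fun k => x k + y k) = norm1 x + norm1 y.
      by rewrite /norm1 -big_split.
    rewrite expnS; lia.
Qed.
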